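(* Let $P$ be a pattern, $S$ a schedule for $P$, and $L$ the relation set produced by the restriction generation procedure. Every pair in $L$ has the form $(S[a],S[b])$ with $a<b$. For each $k\in\{0,\dots,n-1\}$ such that some pair $(S[z],S[k])$ lies in $L$, let $c_k$ be the largest index $z$ with $(S[z],S[k])\in L$, and let $L'=\{(S[c_k],S[k])\}$ be the set of these chosen pairs. Then for every map $f:V(P)\to\mathbb{R}$, if $f(S[c_k])>f(S[k])$ for every chosen pair $(S[c_k],S[k])\in L'$, then $f(u)>f(w)$ for every $(u,w)\in L$.
   Context: A pattern $P$ is a finite simple connected graph on $n$ labeled vertices; $\mathrm{Aut}(P)$ is its automorphism group (bijections $V(P)\to V(P)$ preserving adjacency and non-adjacency). A schedule for $P$ is a sequence $S=(S[0],\dots,S[n-1])$ listing every vertex of $P$ exactly once such that each $S[k]$ with $k\ge 1$ is adjacent in $P$ to some $S[j]$ with $j<k$. Restriction generation procedure: set $A_0=\mathrm{Aut}(P)$ and, for $i=0,1,\dots,n-1$, add to $L$ every pair $(S[i],x(S[i]))$ with $x\in A_i$ and $x(S[i])\neq S[i]$, then set $A_{i+1}=\{x\in A_i : x(S[i])=S[i]\}$. Equivalently, $L=\{(S[i],x(S[i])) : 0\le i<n,\ x\in\mathrm{Aut}(P),\ x(S[j])=S[j]\text{ for all } j<i,\ x(S[i])\ne S[i]\}$. *)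

(* Defs.v *)
From HB Require Import structures.
From mathcomp Require Import all_boot all_order all_algebra all_fingroup.
Set Implicit Arguments. Unset Strict Implicit. Unset Printing Implicit Defensive.

Definition simple_graph n (e : rel 'I_n) : Prop :=
  (forall u v, e u v = e v u) /\ (forall u, ~~ e u u).

Definition connected_graph n (e : rel 'I_n) : Prop :=
  forall u v, connect e u v.

Definition pattern n (e : rel 'I_n) : Prop :=
  simple_graph e /\ connected_graph e.

Definition is_aut n (e : rel 'I_n) (x : {perm 'I_n}) : Prop :=
  forall u v, e (x u) (x v) = e u v.

Definition schedule n (e : rel 'I_n) (S : 'I_n -> 'I_n) : Prop :=
  bijective S /\
  forall k : 'I_n, 0 < k -> exists j : 'I_n, j < k /\ e (S j) (S k).

(* The restriction set L produced by the generation procedure (closed form). *)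
Definition inL n (e : rel 'I_n) (S : 'I_n -> 'I_n) (u w : 'I_n) : Prop :=
  exists (i : 'I_n) (x : {perm 'I_n}),
    [/\ is_aut e x,
        (forall j : 'I_n, j < i -> x (S j) = S j),
        x (S i) != S i,
        u = S i & w = x (S i)].

Definition chosen n (e : rel 'I_n) (S : 'I_n -> 'I_n) (k z : 'I_n) : Prop :=
  inL e S (S z) (S k) /\ forall z' : 'I_n, inL e S (S z') (S k) -> z' <= z.

(* Main.v *)
Require Import Defs.
From HB Require Import structures.
From mathcomp Require Import all_boot all_order all_algebra all_fingroup.
From Stdlib Require Import Classical.
From mathcomp Require Import zify.
Import Order.TTheory GRing.Theory Num.Theory.
Local Open Scope ring_scope.

Lemma inL_idx n (e : rel 'I_n) (S : 'I_n -> 'I_n) :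
  injective S -> forall a b : 'I_n, inL e S (S a) (S b) ->
  exists x : {perm 'I_n}, [/\ is_aut e x,
        (forall j : 'I_n, (j < a)%N -> x (S j) = S j),
        x (S a) = S b & (a < b)%N].
Proof.
move=> Sinj a b [i [x [ax fx nx ea eb]]].
have ei : i = a by apply: Sinj.
subst i; exists x; split => //.
have nab : a != b by apply/eqP => h; move: nx; rewrite -eb h eqxx.
case: (ltngtP a b) => // [hb|hab]; last first.
  by move: nab; rewrite (val_inj hab) eqxx.
have h := fx _ hb; rewrite eb in h.
by case/negP: nx; apply/eqP; apply: (@perm_inj _ x).
Qed.

Arguments inL_idx {n e S} Sinj {a b}.

Lemma inL_trans n (e : rel 'I_n) (S : 'I_n -> 'I_n) (a b c : 'I_n) :
  injective S -> inL e S (S a) (S b) -> inL e S (S c) (S b) -> (a < c)%N ->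
  inL e S (S a) (S c).
Proof.
move=> Sinj /(inL_idx Sinj) [x [ax fx xa _]] /(inL_idx Sinj) [y [ay fy yc _]] ac.
exists a, (x * y^-1)%g; split => //.
- move=> u v; rewrite !permM.
  by rewrite -(ay (y^-1 (x u))%g) !permKV ax.
- move=> j hj; rewrite permM fx //.
  by apply: (@perm_inj _ y); rewrite permKV fy // (ltn_trans hj ac).
- rewrite permM xa -yc permK.
  apply/eqP => /Sinj h; by move: ac; rewrite h ltnn.
- by rewrite permM xa -yc permK.
Qed.

Arguments inL_trans {n e S a b c}.

Lemma ex_max n (P : 'I_n -> Prop) (a : 'I_n) :
  P a -> exists z : 'I_n, P z /\ forall z', P z' -> (z' <= z)%N.
Proof.
move: {2}(n - a)%N (leqnn (n - a)%N) => d.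
elim: d a => [|d IH] a hd Pa.
  exists a; split => // z' _; have := ltn_ord z'; have := ltn_ord a; lia.
case: (classic (exists z', P z' /\ (a < z')%N)) => [[z' [Pz az]]|hn].
  apply: (IH z') => //; have := ltn_ord z'; lia.
exists a; split => // z' Pz; case: (leqP z' a) => // h.
by exfalso; apply: hn; exists z'.
Qed.

Arguments ex_max {n P a}.

Theorem theorem2 (n : nat) (e : rel 'I_n) (S : 'I_n -> 'I_n)
  (hP : pattern e) (hS : schedule e S) :
  (forall u w, inL e S u w ->
     exists a b : 'I_n, [/\ (a < b)%N, u = S a & w = S b]) /\
  (forall (R : realFieldType) (f : 'I_n -> R),
     (forall k z : 'I_n, chosen e S k z -> f (S k) < f (S z)) ->
     forall u w, inL e S u w -> f w < f u).
Proof.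
have Sinj : injective S by case: hS => /bij_inj.
have part1 : forall u w, inL e S u w ->
     exists a b : 'I_n, [/\ (a < b)%N, u = S a & w = S b].
  move=> u w h; case: (h) => [i [x [ax fx nx ui wi]]].
  case: hS => [[g Sg gS] _].
  have h' : inL e S (S i) (S (g w)) by rewrite gS -ui.
  have [y [_ _ _ ib]] := inL_idx Sinj h'.
  by exists i, (g w); rewrite gS.
split => // R f hf u w hL.
have [a [b [ab eu ew]]] := part1 _ _ hL; subst u w.
move: {2}(b : nat) (leqnn b) => m; elim: m a b ab hL => [|m IH] a b ab hL hm.
  by move: ab; rewrite leqn0 in hm; rewrite (eqP hm).
have [c [Pc cmax]] := @ex_max _ (fun z => inL e S (S z) (S b)) a hL.
have hc := hf b c (conj Pc cmax).
have [_ [_ _ _ cb]] := inL_idx Sinj Pc.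
have ac := cmax _ hL.
case: (ltngtP a c) => [ac'|ca|eac]; [|by move: ac; rewrite leqNgt ca|]; last first.
  move: hc; have -> : c = a by apply: val_inj.
  done.
have h2 := IH a c ac' (inL_trans Sinj hL Pc ac') (leq_trans cb hm).
exact: lt_trans hc h2.
Qed.
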